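(* Let $(y_i,x_i)\in\mathbb{R}^3\times\mathbb{R}^3$ be a point pair. There is a symmetric $4\times 4$ matrix $Q_i$ such that for every rotation $R_0\in SO(3)$ and every unit quaternion representation $w_0\in\mathbb{S}^3$ of $R_0$, $$\|y_i-R_0x_i\|_2^2=w_0^\top Q_i w_0 .$$ Moreover, $Q_i$ is positive semidefinite and its eigenvalues (counted with multiplicity) are $$(\|y_i\|_2+\|x_i\|_2)^2,\ (\|y_i\|_2+\|x_i\|_2)^2,\ (\|y_i\|_2-\|x_i\|_2)^2,\ (\|y_i\|_2-\|x_i\|_2)^2 .$$
   Context: $\mathbb{S}^3$ is the unit sphere in $\mathbb{R}^4$. For $w=[w_1;w_2;w_3;w_4]\in\mathbb{S}^3$ let $$R(w)=\begin{bmatrix} w_1^2+w_2^2-w_3^2-w_4^2 & 2(w_2w_3-w_1w_4) & 2(w_2w_4+w_1w_3)\\ 2(w_2w_3+w_1w_4) & w_1^2+w_3^2-w_2^2-w_4^2 & 2(w_3w_4-w_1w_2)\\ 2(w_2w_4-w_1w_3) & 2(w_3w_4+w_1w_2) & w_1^2+w_4^2-w_2^2-w_3^2\end{bmatrix}.$$ Every $R(w)$ is in $SO(3)$ and every $R\in SO(3)$ equals $R(w)$ for exactly two unit quaternions $\pm w$, called the unit quaternion representations of $R$. *)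

(* Defs.v *)
From HB Require Import structures.
From mathcomp Require Import all_boot all_order all_algebra.
Set Implicit Arguments. Unset Strict Implicit. Unset Printing Implicit Defensive.
Import Order.TTheory GRing.Theory Num.Theory.
Local Open Scope ring_scope.

Definition norm2 (R : rcfType) (n : nat) (v : 'cV[R]_n) : R :=
  Num.sqrt (\sum_(i < n) v i 0 ^+ 2).

Definition isSO3 (R : rcfType) (M : 'M[R]_3) : Prop :=
  M^T *m M = 1%:M /\ \det M = 1.

Definition inS3 (R : rcfType) (w : 'cV[R]_4) : Prop :=
  \sum_(i < 4) w i 0 ^+ 2 = 1.

Definition quatR (R : rcfType) (w : 'cV[R]_4) : 'M[R]_3 :=
  let w1 := w (inord 0) 0 in let w2 := w (inord 1) 0 in
  let w3 := w (inord 2) 0 in let w4 := w (inord 3) 0 in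
  \matrix_(i < 3, j < 3)
    match nat_of_ord i, nat_of_ord j with
    | 0, 0 => w1^+2 + w2^+2 - w3^+2 - w4^+2
    | 0, 1 => 2 * (w2 * w3 - w1 * w4)
    | 0, _ => 2 * (w2 * w4 + w1 * w3)
    | 1, 0 => 2 * (w2 * w3 + w1 * w4)
    | 1, 1 => w1^+2 + w3^+2 - w2^+2 - w4^+2
    | 1, _ => 2 * (w3 * w4 - w1 * w2)
    | _, 0 => 2 * (w2 * w4 - w1 * w3)
    | _, 1 => 2 * (w3 * w4 + w1 * w2)
    | _, _ => w1^+2 + w4^+2 - w2^+2 - w3^+2
    end.

Definition quat_rep (R : rcfType) (w : 'cV[R]_4) (M : 'M[R]_3) : Prop :=
  inS3 w /\ quatR w = M.

Definition symmetric_mx (R : rcfType) (n : nat) (Q : 'M[R]_n) : Prop := Q^T = Q.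

Definition psd_mx (R : rcfType) (n : nat) (Q : 'M[R]_n) : Prop :=
  forall v : 'cV[R]_n, 0 <= (v^T *m Q *m v) 0 0.

Definition qform (R : rcfType) (n : nat) (Q : 'M[R]_n) (w : 'cV[R]_n) : R :=
  (w^T *m Q *m w) 0 0.

(* Main.v *)
Require Import Defs.
From HB Require Import structures.
From mathcomp Require Import all_boot all_order all_algebra.
From mathcomp Require Import ring.
Import Order.TTheory GRing.Theory Num.Theory.
Local Open Scope ring_scope.

Lemma bump0n n : bump 0 n = n.+1. Proof. by rewrite /bump leq0n. Qed.
Lemma bumpS0 n : bump n.+1 0 = 0%N. Proof. by []. Qed.

Lemma sum3 (V : nmodType) (F : 'I_3 -> V) :
  \sum_(i < 3) F i = F (inord 0) + F (inord 1) + F (inord 2).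
Proof.
rewrite !big_ord_recl big_ord0 addr0 !addrA.
congr (_ + _ + _); congr F; apply/val_inj; rewrite /= inordK //.
Qed.

Lemma sum4 (V : nmodType) (F : 'I_4 -> V) :
  \sum_(i < 4) F i = F (inord 0) + F (inord 1) + F (inord 2) + F (inord 3).
Proof.
rewrite !big_ord_recl big_ord0 addr0 !addrA.
congr (_ + _ + _ + _); congr F; apply/val_inj; rewrite /= inordK //.
Qed.

Section Aux.
Variable R : rcfType.
Variables y x : 'cV[R]_3.

Definition yv (v : 'cV[R]_3) (k : nat) : R := v (inord k) 0.

Definition Mf (i j : nat) : R :=
  let d k := yv y k - yv x k in
  let e k := yv y k + yv x k in
  match i, j with
  | 0, 1 => - d 0%N | 0, 2 => - d 1%N | 0, 3 => - d 2%N
  | 1, 0 => d 0%N | 1, 2 => - e 2%N | 1, 3 => e 1%N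
  | 2, 0 => d 1%N | 2, 1 => e 2%N | 2, 3 => - e 0%N
  | 3, 0 => d 2%N | 3, 1 => - e 1%N | 3, 2 => e 0%N
  | _, _ => 0
  end.

Definition Qf (i j : nat) : R :=
  Mf 0 i * Mf 0 j + Mf 1 i * Mf 1 j + Mf 2 i * Mf 2 j + Mf 3 i * Mf 3 j.

Definition Qm : 'M[R]_4 := \matrix_(i < 4, j < 4) Qf i j.

Lemma Qm_sym : symmetric_mx Qm.
Proof. by apply/matrixP => i j; rewrite !mxE /Qf; ring. Qed.

End Aux.
Arguments Mf {R} y x i j.
Arguments Qf {R} y x i j.
Arguments Qm {R} y x.
Arguments yv {R} v k.

Theorem lemma2p1 (R : rcfType) (y x : 'cV[R]_3) :
  exists Q : 'M[R]_4,
    [/\ symmetric_mx Q,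
        (forall (R0 : 'M[R]_3) (w0 : 'cV[R]_4),
            isSO3 R0 -> quat_rep w0 R0 ->
            norm2 (y - R0 *m x) ^+ 2 = qform Q w0),
        psd_mx Q
      & char_poly Q =
          ('X - ((norm2 y + norm2 x) ^+ 2)%:P) ^+ 2 *
          ('X - ((norm2 y - norm2 x) ^+ 2)%:P) ^+ 2].
Proof.
exists (Qm y x); split.
- exact: Qm_sym.
- move=> R0 w _ [Hw <-].
  move: Hw; rewrite /inS3 sum4 => Hw.
  rewrite /norm2 sqr_sqrtr; last by apply: sumr_ge0 => i _; apply: sqr_ge0.
  rewrite /qform /quatR sum3 !mxE !sum3 !mxE !sum4 !mxE !sum4 !mxE !inordK //=.
  rewrite /Qf /Mf /yv /=.
  move: Hw.
  set w0 := w (inord 0) 0; set w1 := w (inord 1) 0;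
  set w2 := w (inord 2) 0; set w3 := w (inord 3) 0.
  set y0 := y (inord 0) 0; set y1 := y (inord 1) 0; set y2 := y (inord 2) 0.
  set x0 := x (inord 0) 0; set x1 := x (inord 1) 0; set x2 := x (inord 2) 0.
  move=> Hw.
  apply/eqP; rewrite -subr_eq0; apply/eqP.
  transitivity ((w0 ^+ 2 + w1 ^+ 2 + w2 ^+ 2 + w3 ^+ 2 - 1) *
     ((w0 ^+ 2 + w1 ^+ 2 + w2 ^+ 2 + w3 ^+ 2) * (x0^+2 + x1^+2 + x2^+2)
      - (y0^+2 + y1^+2 + y2^+2))); first by ring.
  by rewrite Hw subrr mul0r.
- move=> v.
  have -> : (v^T *m Qm y x *m v) 0 0 =
    \sum_(k < 4) (\sum_(j < 4) Mf y x k j * v j 0) ^+ 2.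
    rewrite !sum4 !mxE !sum4 !mxE !sum4 !mxE !inordK //= /Qf /Mf /=; ring.
  by apply: sumr_ge0 => i _; apply: sqr_ge0.
- have nsq (v : 'cV[R]_3) : norm2 v ^+ 2 = yv v 0 ^+ 2 + yv v 1 ^+ 2 + yv v 2 ^+ 2.
    rewrite /norm2 sqr_sqrtr; last by apply: sumr_ge0 => i _; apply: sqr_ge0.
    by rewrite sum3.
  have -> : ('X - ((norm2 y + norm2 x) ^+ 2)%:P) ^+ 2 *
            ('X - ((norm2 y - norm2 x) ^+ 2)%:P) ^+ 2 =
    (('X - (norm2 y ^+ 2 + norm2 x ^+ 2)%:P) ^+ 2
       - (4 * norm2 y ^+ 2 * norm2 x ^+ 2)%:P) ^+ 2 :> {poly R}.
    by ring.
  rewrite !nsq /char_poly.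
  have -> : char_poly_mx (Qm y x) =
     \matrix_(i < 4, j < 4) ((if (i == j :> nat) then 'X else 0) - (Qf y x i j)%:P).
    apply/matrixP => i j; rewrite !mxE.
    case: (i =P j) => [->|ne]; first by rewrite !eqxx.
    have /negbTE -> : (nat_of_ord i != j) by apply/eqP => h; apply: ne; apply/val_inj.
    by rewrite mulr0n.
  rewrite /char_poly.
  rewrite !(expand_det_row _ ord0) !big_ord_recl big_ord0 /cofactor.
  rewrite !(expand_det_row _ ord0) !big_ord_recl big_ord0 /cofactor.
  rewrite !(expand_det_row _ ord0) !big_ord_recl !big_ord0 /cofactor.
  rewrite !det_mx11 !mxE /=.
  rewrite !(bump0n, bumpS0, bumpS) /= /Qf /Mf /=.
  rewrite !add0n.
  ring.
Qed.
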